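(* Let $q\in\mathbb{C}$, $|q|<1$, $\mathbf{s}=(s_1,\dots,s_d)\in\mathbb{N}^d$ and $\mathbf{a}=(a_1,\dots,a_d)\in\mathbb{Z}_{\ge0}^d$, and put $w=s_1+\dots+s_d$. Let $$F(t)=\mathbf{R}^{a_1}\Big[\mathbf{P}^{s_1-a_1}\big[\mathbf{y}\,\mathbf{R}^{a_2}[\mathbf{P}^{s_2-a_2}[\mathbf{y}\cdots\mathbf{R}^{a_d}[\mathbf{P}^{s_d-a_d}[\mathbf{y}]]\cdots]]\big]\Big](t).$$ If $a_1+\dots+a_j>0$ for all $j=1,\dots,d$, then $\zeta_q^{\mathbf{a}}[\mathbf{s}]=(1-q)^wF(1)$ and $\mathfrak{z}_q^{\mathbf{a}}[\mathbf{s}]=F(1)$.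
   Context: $\mathfrak{z}_q^{\mathbf{t}}[\mathbf{s}]=\sum_{k_1>\dots>k_d>0}\prod_{j}\frac{q^{k_jt_j}}{(1-q^{k_j})^{s_j}}$ and $\zeta_q^{\mathbf{t}}[\mathbf{s}]=(1-q)^{|\mathbf{s}|}\mathfrak{z}_q^{\mathbf{t}}[\mathbf{s}]$. Operators on power series $f(t)$ without constant term in $t$: $\mathbf{P}[f](t)=\sum_{k\ge0}f(q^kt)$, $\mathbf{R}[f](t)=\sum_{k\ge1}f(q^kt)$, $\mathbf{D}[f](t)=f(t)-f(qt)$; $\mathbf{P}^m$ is the $m$-fold composition of $\mathbf{P}$ for $m\ge0$ and $\mathbf{P}^m:=\mathbf{D}^{-m}$ for $m<0$; $\mathbf{y}$ denotes multiplication by $\mathbf{y}(t)=\frac{t}{1-t}$ (and the innermost $\mathbf{y}$ is the function $\mathbf{y}(t)$ itself). $F(1)$ is the value at $t=1$. *)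

(* Defs.v *)
From HB Require Import structures.
From mathcomp Require Import all_boot all_order all_algebra.
From mathcomp Require Import all_classical all_reals all_analysis.
From mathcomp Require Import complex.
Set Implicit Arguments.
Unset Strict Implicit.
Unset Printing Implicit Defensive.
Import Order.TTheory GRing.Theory Num.Theory.
Import numFieldNormedType.Exports.
Local Open Scope classical_set_scope.
Local Open Scope ring_scope.

(* The complex numbers C = R[i], viewed as a numClosedFieldType so that
   MathComp-Analysis's normed/topological structure applies. *)
Definition Cplx (R : realType) : numClosedFieldType := R[i].

Section QMZV.
Context {R : realType}.
Local Notation C := (Cplx R).

Definition csum_from (m : nat) (u : nat -> C) : C :=
  limn (fun n => \sum_(m <= k < n) u k).

Definition zterm (q : C) (k s t : nat) : C :=
  (q ^+ k) ^+ t / (1 - q ^+ k) ^+ s.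

(* zinner q b [:: (s_j,t_j); ...; (s_d,t_d)] =
     sum_{b > k_j > ... > k_d > 0} prod_i zterm q k_i s_i t_i  (finite sum) *)
Fixpoint zinner (q : C) (b : nat) (st : seq (nat * nat)) : C :=
  match st with
  | [::] => 1
  | (s, t) :: st' => \sum_(1 <= k < b) zterm q k s t * zinner q k st'
  end.

(* frak z_q^t[s] = sum_{k_1 > ... > k_d > 0} prod_j q^{k_j t_j}/(1-q^{k_j})^{s_j},
   summed with k_1 outermost (inner sums are finite). *)
Definition zfrak (q : C) (t s : seq nat) : C :=
  match zip s t with
  | [::] => 1
  | (s1, t1) :: st' => csum_from 1 (fun k => zterm q k s1 t1 * zinner q k st')
  end.

Definition zetaq (q : C) (t s : seq nat) : C :=
  (1 - q) ^+ (\sum_(x <- s) x)%N * zfrak q t s.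

(* A formal power series f(t) = sum_n f n t^n is its coefficient sequence. *)
Definition fps := nat -> C.

(* f(q^k t) has coefficients f n * (q^k)^n. *)
(* P[f](t) = sum_{k>=0} f(q^k t)  (coefficientwise sum) *)
Definition Pop (q : C) (f : fps) : fps :=
  fun n => csum_from 0 (fun k => f n * (q ^+ k) ^+ n).
(* R[f](t) = sum_{k>=1} f(q^k t) *)
Definition Rop (q : C) (f : fps) : fps :=
  fun n => csum_from 1 (fun k => f n * (q ^+ k) ^+ n).
(* D[f](t) = f(t) - f(q t) *)
Definition Dop (q : C) (f : fps) : fps :=
  fun n => f n - f n * q ^+ n.

(* P^m for m : int ; P^m := D^{-m} for m < 0 *)
Definition Ppow (q : C) (m : int) (f : fps) : fps :=
  match m with
  | Posz k => iter k (Pop q) f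
  | Negz k => iter k.+1 (Dop q) f
  end.

Definition Rpow (q : C) (a : nat) (f : fps) : fps := iter a (Rop q) f.

(* y(t) = t/(1-t) = sum_{n>=1} t^n *)
Definition yps : fps := fun n => (n != 0%N)%:R.

Definition ymul (f : fps) : fps :=
  fun n => \sum_(i < n.+1) yps i * f (n - i)%N.

(* Fnest q [:: (s_1,a_1); ...; (s_d,a_d)] =
   R^{a_1}[P^{s_1-a_1}[y R^{a_2}[P^{s_2-a_2}[y ... R^{a_d}[P^{s_d-a_d}[y]]...]]]] *)
Fixpoint Fnest (q : C) (sa : seq (nat * nat)) : fps :=
  match sa with
  | [::] => yps
  | (s, a) :: sa' =>
      Rpow q a (Ppow q (s%:Z - a%:Z)
        (match sa' with [::] => yps | _ => ymul (Fnest q sa') end))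
  end.

(* F(1): value at t = 1 of the power series, i.e. sum of its coefficients *)
Definition ps_at1 (F : fps) : C := csum_from 0 F.

End QMZV.

(* Main.v *)
Require Import Defs.
From HB Require Import structures.
From mathcomp Require Import all_boot all_order all_algebra.
From mathcomp Require Import all_classical all_reals all_analysis.
From mathcomp Require Import complex.
From mathcomp Require Import ring zify lra.
Import Order.TTheory GRing.Theory Num.Theory.
Import numFieldNormedType.Exports.
Local Open Scope classical_set_scope.
Local Open Scope ring_scope.
Section S. Variable R : realType.
Local Notation C := (Cplx R).
Lemma normcE (z : C) : `|z| = (Normc.normc z)%:C%C.
Proof. by []. Qed.

Lemma cvgC_bound (u : nat -> C) (l : C) (b : nat -> R) :
  b @ \oo --> (0:R) -> (\forall n \near \oo, `|u n - l| <= (b n)%:C%C) ->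
  u @ \oo --> l.
Proof.
move=> b0 ub; apply/cvgrPdist_lt => e e0.
move: (e0); rewrite ltcE => /andP[/eqP Ie Re0].
have eE : e = (complex.Re e)%:C%C by case: e Ie {e0 Re0} => a c /= ->.
move/cvgrPdist_lt : b0 => /(_ _ Re0) bn.
near=> n.
rewrite distrC; apply: (@le_lt_trans _ _ (b n)%:C%C).
  by near: n.
rewrite [X in _ < X]eE ltcR; apply: le_lt_trans (ler_norm _) _.
rewrite -normrN -(sub0r (b n)); by near: n.
Unshelve. all: by end_near. Qed.

Lemma geo_sum (c x : C) (m N : nat) : (m <= N)%N ->
  (\sum_(m <= k < N) c * x ^+ k) * (1 - x) = c * (x ^+ m - x ^+ N).
Proof.
elim: N => [|N IH]; first by rewrite leqn0 => /eqP ->; rewrite big_geq // subrr mulr0 mul0r.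
rewrite leq_eqVlt => /orP[/eqP ->|]; first by rewrite big_geq // subrr mulr0 mul0r.
rewrite ltnS => hm; rewrite big_nat_recr //= mulrDl IH // exprS; ring.
Qed.

Lemma cvg_geoC (c x : C) (m : nat) : `|x| < 1 ->
  (fun N => \sum_(m <= k < N) c * x ^+ k) @ \oo --> c * x ^+ m / (1 - x).
Proof.
move=> x1.
have x1' : 1 - x != 0.
  by rewrite subr_eq0; apply/eqP => ex; move: x1; rewrite -ex normr1 ltxx.
have nx : Normc.normc x < 1 by move: x1; rewrite normcE -[1]/(1%:C%C) ltcR.
have nx0 : 0 <= Normc.normc x by rewrite -(@ler0c R) -normcE.
apply: (@cvgC_bound _ _ (geometric (Normc.normc c / Normc.normc (1 - x)) (Normc.normc x))).
  by apply: cvg_geometric; rewrite ger0_norm.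
near=> N.
have hmN : (m <= N)%N by near: N; exists m.
have -> : \sum_(m <= k < N) c * x ^+ k = c * (x ^+ m - x ^+ N) / (1 - x).
  by rewrite -(geo_sum c x _ _ hmN) mulfK.
have -> : c * (x ^+ m - x ^+ N) / (1 - x) - c * x ^+ m / (1 - x) = - (c * x ^+ N / (1 - x)).
  by field.
rewrite normrN !normrM normfV normrX !normcE /geometric /= -rmorphXn -rmorphV ?unitfE //=.
  by rewrite -!rmorphM /= mulrAC.
apply/eqP => h; move: x1'; rewrite -normr_eq0 normcE h; by rewrite eqxx.
Unshelve. all: by end_near. Qed.

Lemma csum_geo (c x : C) m : `|x| < 1 ->
  csum_from m (fun k => c * x ^+ k) = c * x ^+ m / (1 - x).
Proof. by move=> x1; apply: (cvg_lim (@norm_hausdorff _ _)); apply: cvg_geoC. Qed.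

Lemma csum0 m : csum_from m (fun _ => 0 : C) = 0.
Proof.
rewrite /csum_from; under eq_fun do rewrite big1 //.
exact: (cvg_lim (@norm_hausdorff _ _) (cvg_cst _)).
Qed.


Lemma normc_ReIm (z : C) : Normc.normc z <= `|complex.Re z| + `|complex.Im z|.
Proof.
case: z => a b; rewrite /Normc.normc /=.
rewrite -[X in _ <= X]ger0_norm ?addr_ge0 // -sqrtr_sqr; apply: ler_wsqrtr.
rewrite sqrrD !real_normK ?num_real // -addrA [_ *+ 2 + _]addrC addrA lerDl mulrn_wge0 // mulr_ge0 //.
Qed.

Lemma Re_le (z : C) : `|complex.Re z| <= Normc.normc z.
Proof.
case: z => a b; rewrite /Normc.normc /= -sqrtr_sqr; apply: ler_wsqrtr.
by rewrite lerDl sqr_ge0.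
Qed.

Lemma Im_le (z : C) : `|complex.Im z| <= Normc.normc z.
Proof.
case: z => a b; rewrite /Normc.normc /= -sqrtr_sqr; apply: ler_wsqrtr.
by rewrite lerDr sqr_ge0.
Qed.

Lemma ReD (y z : C) : complex.Re (y + z) = complex.Re y + complex.Re z.
Proof. by case: y; case: z. Qed.
Lemma ImD (y z : C) : complex.Im (y + z) = complex.Im y + complex.Im z.
Proof. by case: y; case: z. Qed.
Lemma ReB (y z : C) : complex.Re (y - z) = complex.Re y - complex.Re z.
Proof. by case: y; case: z. Qed.
Lemma ImB (y z : C) : complex.Im (y - z) = complex.Im y - complex.Im z.
Proof. by case: y; case: z. Qed.

Lemma Re_sum (f : nat -> C) m n :
  complex.Re (\sum_(m <= k < n) f k) = \sum_(m <= k < n) complex.Re (f k).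
Proof. exact: (big_morph _ ReD). Qed.
Lemma Im_sum (f : nat -> C) m n :
  complex.Im (\sum_(m <= k < n) f k) = \sum_(m <= k < n) complex.Im (f k).
Proof. exact: (big_morph _ ImD). Qed.

Lemma cvg_abs0 (f : nat -> R) (l : R) : f @ \oo --> l -> (fun n => `|f n - l|) @ \oo --> (0:R).
Proof.
move=> h; rewrite -(@normr0 _ R) -(subrr l); apply: cvg_norm; apply: cvgB => //; exact: cvg_cst.
Qed.

Lemma cvgC_ReIm (u : nat -> C) (lr li : R) :
  (fun n => complex.Re (u n)) @ \oo --> lr ->
  (fun n => complex.Im (u n)) @ \oo --> li ->
  u @ \oo --> ((lr +i* li)%C : C).
Proof.
move=> h1 h2.
apply: (@cvgC_bound _ _ (fun n => `|complex.Re (u n) - lr| + `|complex.Im (u n) - li|)).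
  by rewrite -[0 : R]addr0; apply: cvgD; apply: cvg_abs0.
near=> n; rewrite normcE lecR; apply: le_trans (normc_ReIm _) _.
by rewrite ReB ImB.
Unshelve. all: by end_near. Qed.

Variable q : C.
Hypothesis hq : `|q| < 1.

Lemma qn1 n : (0 < n)%N -> `|q ^+ n| < 1.
Proof. by move=> n0; rewrite normrX exprn_ilt1 // ?normr_ge0 // -lt0n. Qed.

Lemma qn1' n : (0 < n)%N -> 1 - q ^+ n != 0.
Proof.
move=> /qn1 h; rewrite subr_eq0; apply/eqP => e; by move: h; rewrite -e normr1 ltxx.
Qed.

Lemma Pop_pos (f : fps) n : (0 < n)%N -> Pop q f n = f n / (1 - q ^+ n).
Proof.
move=> n0; rewrite /Pop; under eq_fun do rewrite exprAC.
by rewrite csum_geo ?qn1 // expr0 mulr1.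
Qed.

Lemma Rop_pos (f : fps) n : (0 < n)%N -> Rop q f n = f n * q ^+ n / (1 - q ^+ n).
Proof.
move=> n0; rewrite /Rop; under eq_fun do rewrite exprAC.
by rewrite csum_geo ?qn1 // expr1.
Qed.

Lemma Pop0 (f : fps) : f 0%N = 0 -> Pop q f 0%N = 0.
Proof. by move=> h; rewrite /Pop h; under eq_fun do rewrite mul0r; rewrite csum0. Qed.

Lemma Rop0 (f : fps) : f 0%N = 0 -> Rop q f 0%N = 0.
Proof. by move=> h; rewrite /Rop h; under eq_fun do rewrite mul0r; rewrite csum0. Qed.

Lemma iterP0 k (f : fps) : f 0%N = 0 -> iter k (Pop q) f 0%N = 0.
Proof. by move=> h; elim: k => //= k IH; rewrite Pop0. Qed.
Lemma iterR0 k (f : fps) : f 0%N = 0 -> iter k (Rop q) f 0%N = 0.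
Proof. by move=> h; elim: k => //= k IH; rewrite Rop0. Qed.
Lemma iterD0 k (f : fps) : f 0%N = 0 -> iter k (Dop q) f 0%N = 0.
Proof. by move=> h; elim: k => //= k IH; rewrite /Dop IH mul0r subr0. Qed.

Lemma iterP_pos k (f : fps) n : (0 < n)%N -> iter k (Pop q) f n = f n / (1 - q ^+ n) ^+ k.
Proof.
move=> n0; elim: k => [|k IH] /=; first by rewrite expr0 divr1.
by rewrite Pop_pos // IH exprS; field; rewrite ?expf_neq0 ?qn1' // qn1'.
Qed.
Lemma iterR_pos k (f : fps) n : (0 < n)%N -> iter k (Rop q) f n = f n * (q ^+ n / (1 - q ^+ n)) ^+ k.
Proof.
move=> n0; elim: k => [|k IH] /=; first by rewrite expr0 mulr1.
by rewrite Rop_pos // IH exprS; ring.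
Qed.
Lemma iterD_pos k (f : fps) n : iter k (Dop q) f n = f n * (1 - q ^+ n) ^+ k.
Proof.
elim: k => [|k IH] /=; first by rewrite expr0 mulr1.
by rewrite /Dop IH exprS; ring.
Qed.

Lemma RP0 (s a : nat) (g : fps) : g 0%N = 0 -> Rpow q a (Ppow q (s%:Z - a%:Z) g) 0%N = 0.
Proof.
move=> h; rewrite /Rpow; apply: iterR0; case: (s%:Z - a%:Z) => k /=.
  exact: iterP0.
by rewrite /Dop iterD0 // mul0r subr0.
Qed.

Lemma RP_pos (s a : nat) (g : fps) n : (0 < n)%N ->
  Rpow q a (Ppow q (s%:Z - a%:Z) g) n = g n * zterm q n s a.
Proof.
move=> n0; have u := qn1' _ n0; rewrite /Rpow iterR_pos // /zterm.
case: (leqP a s) => has.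
  rewrite subzn //= iterP_pos // -{2}(subnK has) exprD.
  rewrite exprMn exprVn; field; by rewrite !expf_neq0.
have -> : s%:Z - a%:Z = Negz (a - s).-1.
  rewrite NegzE prednK ?subn_gt0 // -opprB subzn //; exact: ltnW.
rewrite /= -/(iter _.+1 (Dop q) g) iterD_pos prednK ?subn_gt0 //.
rewrite exprMn exprVn.
rewrite [(1 - q ^+ n) ^+ a](_ : _ = (1 - q ^+ n) ^+ (a - s) * (1 - q ^+ n) ^+ s); last first.
  by rewrite -exprD subnK // ltnW.
field; by rewrite !expf_neq0.
Qed.

Lemma ymul_sum (G : @fps R) n : ymul G n = \sum_(0 <= m < n) G m.
Proof.
rewrite /ymul big_ord_recl /= /yps eqxx mul0r add0r.
under eq_bigr do rewrite /bump leq0n add1n /= mul1r.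
rewrite -(big_mkord xpredT (fun i => G (n - i.+1)%N)) big_nat_rev /=.
apply: eq_big_nat => i /andP[_ hi]; congr G; rewrite add0n; lia.
Qed.

Lemma FnestE s a st : Fnest q ((s, a) :: st) =
  Rpow q a (Ppow q (s%:Z - a%:Z) (match st with [::] => yps | _ => ymul (Fnest q st) end)).
Proof. by []. Qed.

Lemma Fnest_cons s a st n :
  Fnest q ((s, a) :: st) n = zterm q n s a * ((n != 0%N)%:R * zinner q n st).
Proof.
elim: st s a n => [|[s' a'] st IH] s a n.
  case: n => [|n]; first by rewrite FnestE RP0 // mul0r mulr0.
  by rewrite FnestE RP_pos // /yps /= mulr1 mulrC.
case: n => [|n].
  rewrite FnestE RP0 ?mul0r ?mulr0 //.
  by rewrite /ymul big_ord_recl big_ord0 /yps /= mul0r addr0.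
rewrite FnestE RP_pos // mulrC; congr (_ * _).
rewrite ymul_sum big_ltn // IH eqxx mulr0n mul0r mulr0 add0r mul1r.
by apply: eq_big_nat => k /andP[hk _]; rewrite IH -lt0n hk mul1r.
Qed.

Let r : C := `|q|.
Let c : C := 1 - r.
Let x : C := 2 / (1 + r).
Lemma r_ge0 : 0 <= r. Proof. exact: normr_ge0. Qed.
Lemma c_gt0 : 0 < c. Proof. by rewrite subr_gt0. Qed.
Lemma r1_gt0 : 0 < 1 + r. Proof. by rewrite ltr_wpDr ?r_ge0. Qed.
Lemma x_gt1 : 1 < x.
Proof. rewrite /x ltr_pdivlMr ?r1_gt0 // mul1r -[2]/(1 + 1) ltrD2l; exact: hq. Qed.
Lemma rx_lt1 : r * x < 1.
Proof.
rewrite /x mulrA ltr_pdivrMr ?r1_gt0 // mul1r mulr_natr mulr2n ltrD2r; exact: hq.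
Qed.
Lemma rx_ge0 : 0 <= r * x.
Proof. by rewrite mulr_ge0 ?r_ge0 // ltW // (lt_trans ltr01 x_gt1). Qed.

Lemma zterm_le k s t : (0 < k)%N -> `|zterm q k s t| <= r ^+ (k * t) * c^-1 ^+ s.
Proof.
move=> k0; rewrite /zterm normrM normfV !normrX -exprM -exprVn.
apply: ler_wpM2l; first by rewrite exprn_ge0 ?r_ge0.
have hc : c <= `|1 - q ^+ k|.
  apply: le_trans (lerB_dist _ _); rewrite normr1 normrX lerD2l lerN2.
  by rewrite -[X in _ <= X]expr1 ler_wiXn2l ?r_ge0 // ltW.
apply: lerXn2r.
- by rewrite nnegrE invr_ge0 normr_ge0.
- by rewrite nnegrE invr_ge0 ltW ?c_gt0.
by rewrite lef_pV2 ?posrE ?c_gt0 // (lt_le_trans c_gt0 hc).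
Qed.

Lemma zterm_le1 k s t : (0 < k)%N -> `|zterm q k s t| <= c^-1 ^+ s.
Proof.
move=> k0; apply: le_trans (@zterm_le k s t k0) _.
rewrite -{2}(mul1r (_ ^+ s)); apply: ler_wpM2r; first by rewrite exprn_ge0 // invr_ge0 ltW ?c_gt0.
by rewrite exprn_ile1 ?r_ge0 // ltW.
Qed.

Fixpoint Kb (st : seq (nat * nat)) : C :=
  match st with [::] => 1 | (s, t) :: st' => c^-1 ^+ s / (x - 1) * Kb st' end.

Lemma Kb_ge0 st : 0 <= Kb st.
Proof.
elim: st => [|[s t] st IH] //=; apply: mulr_ge0 => //; apply: mulr_ge0.
  by rewrite exprn_ge0 // invr_ge0 ltW ?c_gt0.
by rewrite invr_ge0 subr_ge0 ltW // x_gt1.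
Qed.

Lemma geo_le b : \sum_(1 <= k < b) x ^+ k <= x ^+ b / (x - 1).
Proof.
have x1 : 0 < x - 1 by rewrite subr_gt0 x_gt1.
case: b => [|b]; first by rewrite big_geq // expr0 mul1r invr_ge0 ltW.
have := @geo_sum 1 x 1 b.+1 (ltn0Sn b); under eq_bigr do rewrite mul1r.
move=> h; have -> : \sum_(1 <= i < b.+1) x ^+ i = (x ^+ b.+1 - x) / (x - 1).
  apply: (mulIf (lt0r_neq0 x1)); rewrite mulfVK ?lt0r_neq0 //.
  by rewrite -opprB mulrN h; ring.
apply: ler_wpM2r; first by rewrite invr_ge0 ltW.
by rewrite gerBl ltW // (lt_trans ltr01 x_gt1).
Qed.

Lemma zinner_le b st : `|zinner q b st| <= Kb st * x ^+ b.
Proof.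
elim: st b => [|[s t] st IH] b /=.
  by rewrite normr1 mul1r exprn_ege1 // ltW // x_gt1.
apply: le_trans (ler_norm_sum _ _ _) _.

apply: le_trans (_ : \sum_(1 <= k < b) c^-1 ^+ s * Kb st * x ^+ k <= _).
  apply: ler_sum_nat => k /andP[k0 _].
  rewrite normrM -mulrA; apply: ler_pM; rewrite ?normr_ge0 ?zterm_le1 //.
under eq_bigr do rewrite -mulrA.
rewrite -mulr_sumr -!mulrA; apply: ler_wpM2l.
  by rewrite exprn_ge0 // invr_ge0 ltW ?c_gt0.
rewrite -mulr_sumr mulrCA; apply: ler_wpM2l; first exact: Kb_ge0.
by rewrite mulrC geo_le.
Qed.

Lemma F_le s1 a1 st k : (0 < a1)%N ->
  `|Fnest q ((s1, a1) :: st) k| <= (c^-1 ^+ s1 * Kb st) * (r * x) ^+ k.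
Proof.
move=> a10; have M0 : 0 <= c^-1 ^+ s1 * Kb st.
  by rewrite mulr_ge0 ?Kb_ge0 // exprn_ge0 // invr_ge0 ltW ?c_gt0.
rewrite Fnest_cons; case: k => [|k].
  by rewrite eqxx mulr0n mul0r mulr0 normr0 mulr_ge0 // exprn_ge0 // rx_ge0.
rewrite mul1r normrM.
have -> : c^-1 ^+ s1 * Kb st * (r * x) ^+ k.+1 = (r ^+ k.+1 * c^-1 ^+ s1) * (Kb st * x ^+ k.+1).
  by rewrite exprMn; ring.
apply: ler_pM; rewrite ?normr_ge0 ?zinner_le //.
apply: le_trans (@zterm_le k.+1 s1 a1 (ltn0Sn k)) _.
apply: ler_wpM2r; first by rewrite exprn_ge0 // invr_ge0 ltW ?c_gt0.
by rewrite ler_wiXn2l ?r_ge0 ?(ltW hq) // leq_pmulr.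
Qed.

Lemma real_ge0 (z : C) : 0 <= z -> z = (complex.Re z)%:C%C.
Proof. by rewrite lecE => /andP[/eqP h _]; case: z h => a b /= ->. Qed.

Lemma F_cvg s1 a1 st : (0 < a1)%N ->
  exists L : C, (fun n => \sum_(0 <= k < n) Fnest q ((s1, a1) :: st) k) @ \oo --> L.
Proof.
move=> a10; set F := Fnest q _.
set M := c^-1 ^+ s1 * Kb st; set th := r * x.
have M0 : 0 <= M by rewrite mulr_ge0 ?Kb_ge0 // exprn_ge0 // invr_ge0 ltW ?c_gt0.
have th0 : 0 <= th by exact: rx_ge0.
have th1 : th < 1 by exact: rx_lt1.
have rM := @real_ge0 M M0; have rth := @real_ge0 th th0.
have M0' : 0 <= complex.Re M by move: M0; rewrite lecE => /andP[_].
have th0' : 0 <= complex.Re th by move: th0; rewrite lecE => /andP[_].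
have th1' : complex.Re th < 1 by move: th1; rewrite ltcE => /andP[_].
have hb k : Normc.normc (F k) <= complex.Re M * complex.Re th ^+ k.
  have := @F_le s1 a1 st k a10; rewrite -/F -/M -/th rM rth -rmorphXn -rmorphM /=.
  by rewrite normcE lecR.
have geo : cvgn (series (geometric (complex.Re M) (complex.Re th))).
  by apply: is_cvg_geometric_series; rewrite ger0_norm.
have cu : cvgn (series (fun k => complex.Re (F k))).
  apply: (@normed_cvg R R^o); apply: (series_le_cvg _ _ _ geo).
  - by move=> n; exact: normr_ge0.
  - by move=> n; rewrite /geometric; exact: (mulr_ge0 M0' (exprn_ge0 _ th0')).
  - by move=> n; exact: le_trans (Re_le _) (hb n).
have cv : cvgn (series (fun k => complex.Im (F k))).
  apply: (@normed_cvg R R^o); apply: (series_le_cvg _ _ _ geo).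
  - by move=> n; exact: normr_ge0.
  - by move=> n; rewrite /geometric; exact: (mulr_ge0 M0' (exprn_ge0 _ th0')).
  - by move=> n; exact: le_trans (Im_le _) (hb n).
exists ((limn (series (fun k => complex.Re (F k))) +i* limn (series (fun k => complex.Im (F k))))%C).
apply: cvgC_ReIm.
  by under eq_fun do rewrite Re_sum; exact: cu.
by under eq_fun do rewrite Im_sum; exact: cv.
Qed.
End S.

Theorem theorem6p2 (R : realType) (q : Cplx R) (d : nat) (s a : seq nat) :
  `|q| < 1 ->
  (0 < d)%N -> size s = d -> size a = d ->
  all (fun x => 0 < x)%N s ->
  (forall j : nat, (0 < j <= d)%N -> (0 < \sum_(i < j) nth 0%N a i)%N) ->
  let F := Fnest q (zip s a) in
  let w := (\sum_(x <- s) x)%N in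
  (fun n => \sum_(0 <= k < n) F k) @ \oo --> ps_at1 F /\
  zetaq q a s = (1 - q) ^+ w * ps_at1 F /\
  zfrak q a s = ps_at1 F.
Proof.
move=> hq d0 hsd had _ hsum.
case: s hsd => [|s1 s'] hsd; first by move: d0; rewrite -hsd.
case: a had hsum => [|a1 a'] had hsum; first by move: d0; rewrite -had.
have a10 : (0 < a1)%N.
  by have := hsum 1%N; rewrite big_ord1 /=; apply; rewrite -hsd.
move=> F w.
have zE : zip (s1 :: s') (a1 :: a') = (s1, a1) :: zip s' a' by [].
have Feq : zfrak q (a1 :: a') (s1 :: s') = ps_at1 F.
  have fe : (fun N => \sum_(1 <= k < N) zterm q k s1 a1 * zinner q k (zip s' a')) =
            (fun N => \sum_(0 <= k < N) F k).
    apply: funext => N.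
    case: N => [|N]; first by rewrite !big_geq.
    rewrite [in RHS]big_ltn // /F zE Fnest_cons // eqxx mulr0n mul0r mulr0 add0r.
    by apply: eq_big_nat => k /andP[hk _]; rewrite Fnest_cons // -lt0n hk mul1r.
  by rewrite /zfrak /= /ps_at1 /csum_from fe.
have [L HL] := @F_cvg R q hq s1 a1 (zip s' a') a10.
have EL : ps_at1 F = L.
  rewrite /F zE /ps_at1 /csum_from; apply: (cvg_lim (@norm_hausdorff _ _)); exact: HL.
split; first by rewrite EL /F zE.
split => //.
by rewrite /zetaq Feq.
Qed.
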